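(* Let $u:[0,\infty)\to\mathbb{R}\cup\{-\infty\}$ be twice continuously differentiable on $(0,\infty)$ with $u'>0$, $u''<0$ on $(0,\infty)$ and $\lim_{x\downarrow 0}u'(x)=\infty$, and let $(\beta,R,Y)$ be a random vector with strictly positive components and finite support. For $w>0$ let $c(w)$ be the unique solution of $\max_c u(c)+\mathbb{E}[\beta u(R(w-c)+Y)]$ subject to $c>0$ and $R(w-c)+Y\ge 0$ in every state, let $s(w)=w-c(w)$, and let $S=s((0,\infty))$ (an open interval). Define $g:S\to(0,\infty)$ by $$g(s)=(u')^{-1}\big(\mathbb{E}[\beta R\,u'(Rs+Y)]\big).$$ If the consumption function $c$ is concave on $(0,\infty)$, then $g$ is concave on $S$.
   Context: It is known (and may be used) that $c$ and $s$ are continuously differentiable with $c',s'\in(0,1)$, that the Euler equation $u'(c(w))=\mathbb{E}[\beta R u'(Rs(w)+Y)]$ holds, so $g(s(w))=c(w)$ for all $w>0$, and that $g$ is strictly increasing. *)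

(* Defs.v *)
From HB Require Import structures.
From mathcomp Require Import all_boot all_order all_algebra.
From mathcomp Require Import all_classical all_reals all_analysis.
Set Implicit Arguments. Unset Strict Implicit. Unset Printing Implicit Defensive.
Import Order.TTheory GRing.Theory Num.Theory.
Import numFieldNormedType.Exports.
Local Open Scope classical_set_scope.
Local Open Scope ring_scope.

Section Defs.
Variables (R : realType) (n : nat).

(* real part of the utility u : R -> \bar R on (0,oo) *)
Definition ureal (u : R -> \bar R) (x : R) : R := fine (u x).

Definition feasible (Ret Y : 'I_n -> R) (w c : R) : Prop :=
  0 < c /\ forall i, 0 <= Ret i * (w - c) + Y i.

(* objective u(c) + E[beta u(R(w-c)+Y)], with probabilities p *)
Definition objective (u : R -> \bar R) (p beta Ret Y : 'I_n -> R) (w c : R)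
  : \bar R :=
  (u c + \sum_(i < n) ((p i * beta i)%:E * u (Ret i * (w - c) + Y i)%R))%E.

Definition is_consumption_function (u : R -> \bar R) (p beta Ret Y : 'I_n -> R)
  (c : R -> R) : Prop :=
  forall w, 0 < w ->
    feasible Ret Y w (c w) /\
    forall c', feasible Ret Y w c' -> c' <> c w ->
      (objective u p beta Ret Y w c' < objective u p beta Ret Y w (c w))%E.

Definition pos_inverse (f : R -> R) (y : R) : R :=
  xget 0 [set x | 0 < x /\ f x = y].

Definition gfun (u : R -> \bar R) (p beta Ret Y : 'I_n -> R) (s : R) : R :=
  pos_inverse (derive1 (ureal u))
    (\sum_(i < n) p i * (beta i * Ret i * derive1 (ureal u) (Ret i * s + Y i))).

Definition concave_on (D : set R) (f : R -> R) : Prop :=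
  forall x y t, D x -> D y -> 0 <= t <= 1 ->
    t * f x + (1 - t) * f y <= f (t * x + (1 - t) * y).

End Defs.

(* Main.v *)
Require Import Defs.
From HB Require Import structures.
From mathcomp Require Import all_boot all_order all_algebra.
From mathcomp Require Import all_classical all_reals all_analysis.
From mathcomp Require Import ring lra.
Import Order.TTheory GRing.Theory Num.Theory.
Import numFieldNormedType.Exports.
Local Open Scope classical_set_scope.
Local Open Scope ring_scope.
Set Implicit Arguments. Unset Strict Implicit. Unset Printing Implicit Defensive.
Lemma decr_pos (R : realType) (f : R -> R) :
  (forall x, 0 < x -> derivable f x 1) -> (forall x, 0 < x -> derive1 f x < 0) ->
  forall x y, 0 < x -> x < y -> f y < f x.
Proof.
move=> df dd x y x0 xy.
apply: (@ltr0_derive1_decr R f x y) => //.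
- move=> z; rewrite in_itv /= => /andP[h1 h2]; apply: df; lra.
- move=> z; rewrite in_itv /= => /andP[h1 h2]; apply: dd; lra.
- apply: derivable_within_continuous => z; rewrite in_itv /= => /andP[h1 h2].
  apply: df; lra.
Qed.

Lemma ivt_pos (R : realType) (f : R -> R) (a b v : R) :
  (forall x, 0 < x -> derivable f x 1) -> 0 < a -> a <= b ->
  Num.min (f a) (f b) <= v <= Num.max (f a) (f b) -> exists x, 0 < x /\ f x = v.
Proof.
move=> df a0 ab hv.
have dc : {within `[a, b], continuous f}.
  apply: derivable_within_continuous => z; rewrite in_itv /= => /andP[h1 h2]; apply: df; lra.
have [x hx fx] := IVT ab dc hv.
by exists x; split => //; move: hx; rewrite in_itv /= => /andP[h1 h2]; lra.
Qed.

Lemma pos_inv_spec (R : realType) (f : R -> R) v :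
  (exists x, 0 < x /\ f x = v) -> 0 < pos_inverse f v /\ f (pos_inverse f v) = v.
Proof. by move=> h; rewrite /pos_inverse; apply: (xgetPex 0 h). Qed.
Lemma aff_der (R : realType) (a b x : R) : is_derive x 1 (fun y : R => a * y + b) a.
Proof.
have -> : (fun y : R => a * y + b) = (a *: (@id R)) + cst b.
  by apply/funext => y /=.
have h1 : is_derive x 1 (a *: (@id R)) (a *: 1) by apply: is_deriveZ.
have h2 : is_derive x 1 (cst b : R -> R) 0 by apply: is_derive_cst.
have := is_deriveD h1 h2.
by rewrite scaler1 addr0.
Qed.
Lemma is_derive_aff (R : realType) (f : R -> R) (k a b x : R) :
  derivable f (a * x + b) 1 ->
  is_derive x 1 (fun y => k * f (a * y + b)) (k * (derive1 f (a * x + b) * a)).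
Proof.
move=> df.
have hg := @aff_der R a b x.
have dg : derivable (fun y : R => a * y + b) x 1 by case: hg.
have dc : derivable (f \o (fun y : R => a * y + b)) x 1.
  by apply/derivable1_diffP/differentiable_comp; apply/derivable1_diffP.
have e1 := derive1_comp dg df.
have e2 : derive1 (fun y : R => a * y + b) x = a by rewrite derive1E derive_val.
have h3 := derivableP dc.
rewrite -derive1E e1 e2 in h3.
have h4 := is_deriveZ k h3.
have -> : (fun y => k * f (a * y + b)) = k *: (f \o (fun y : R => a * y + b)).
  by apply/funext => y.
exact: h4.
Qed.
Lemma euler (R : realType) (n : nat) (p beta Ret Y : 'I_n -> R) (u : R -> \bar R) (c : R -> R) (w : R) :
  (forall x, 0 < x -> u x \is a fin_num) ->
  (forall x, 0 < x -> derivable (ureal u) x 1) ->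
  is_consumption_function u p beta Ret Y c -> 0 < w ->
  (forall i, 0 < Ret i) ->
  (forall i, 0 < Ret i * (w - c w) + Y i) ->
  derive1 (ureal u) (c w) = \sum_(i < n) p i * (beta i * Ret i * derive1 (ureal u) (Ret i * (w - c w) + Y i)).
Proof.
move=> hfin hder hc w0 R0 hint.
have [[c0 _] cmax] := hc w w0.
set cw := c w in c0 cmax hint *.
set U := ureal u.
have Faff : forall i x, (- Ret i) * x + (Ret i * w + Y i) = Ret i * (w - x) + Y i.
  by move=> i x; rewrite mulrBr mulNr addrA [_ + Ret i * w]addrC.
pose h := fun (i : 'I_n) (x : R) => (p i * beta i) * U ((- Ret i) * x + (Ret i * w + Y i)).
pose F := U + \sum_(i < n) h i.
have FE : forall x, F x = U x + \sum_(i < n) (p i * beta i) * U (Ret i * (w - x) + Y i).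
  move=> x; rewrite /F /= fct_sumE; congr (_ + _); apply: eq_bigr => i _.
  by rewrite /h Faff.
have hs : forall i, \forall x \near cw, 0 < Ret i * (w - x) + Y i.
  move=> i.
  have : cw \in `]-oo, w + Y i / Ret i[.
    rewrite in_itv /= -subr_gt0 -(pmulr_rgt0 _ (R0 i)) mulrBr mulrDr mulrCA mulfV ?gt_eqF // mulr1.
    by move: (hint i); rewrite mulrBr addrAC.
  move/near_in_itvNyo; apply: filterS => x; rewrite in_itv /= => hx.
  move: hx; rewrite -subr_gt0 -(pmulr_rgt0 _ (R0 i)) mulrBr mulrDr mulrCA mulfV ?gt_eqF // mulr1.
  by rewrite mulrBr addrAC.
have hall := @filter_forall _ _ (fun i x => 0 < Ret i * (w - x) + Y i) (nbhs cw) _ hs.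
have hp : \forall x \near cw, 0 < x.
  have : cw \in `]0, +oo[ by rewrite in_itv /= c0.
  by move/near_in_itvoy; apply: filterS => x; rewrite in_itv /= andbT.
have ng : \forall x \near cw, 0 < x /\ forall i, 0 < Ret i * (w - x) + Y i.
  by near=> x; split; [near: x; exact: hp | near: x; exact: hall].
have [e e0 he] := (nbhs_ballP _ _).1 ng.
have {}e0 : 0 < e := e0.
rewrite ball_itv in he.
have good : forall t, t \in `]cw - e, cw + e[ -> 0 < t /\ forall i, 0 < Ret i * (w - t) + Y i.
  by move=> t ht; apply: he; rewrite /= ht.
have objE : forall x, 0 < x -> (forall i, 0 < Ret i * (w - x) + Y i) ->
    objective u p beta Ret Y w x = (F x)%:E.
  move=> x x0 hx; rewrite /objective FE -(fineK (hfin x x0)).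
  under eq_bigr => i _ do rewrite -(fineK (hfin _ (hx i))) -EFinM.
  by rewrite sumEFin -EFinD.
have Fmax : forall t, t \in `]cw - e, cw + e[ -> F t <= F cw.
  move=> t ht; have [t0 ht'] := good t ht.
  case: (eqVneq t cw) => [->|/eqP tne] //.
  have := cmax t (conj t0 (fun i => ltW (ht' i))) tne.
  by rewrite !objE // lte_fin => /ltW.
pose D := fun t => derive1 U t + \sum_(i < n) (p i * beta i) * (derive1 U (Ret i * (w - t) + Y i) * - Ret i).
have Fder : forall t, 0 < t -> (forall i, 0 < Ret i * (w - t) + Y i) -> is_derive t 1 F (D t).
  move=> t t0 ht; apply: is_deriveD.
    by rewrite derive1E; apply: derivableP; apply: hder.
  rewrite /D.
  have -> : \sum_(i < n) (p i * beta i) * (derive1 U (Ret i * (w - t) + Y i) * - Ret i)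
     = \sum_(i < n) (p i * beta i) * (derive1 U ((- Ret i) * t + (Ret i * w + Y i)) * - Ret i).
    by apply: eq_bigr => i _; rewrite Faff.
  apply: is_derive_sum => i; rewrite /h.
  apply: is_derive_aff; rewrite Faff; exact: hder.
have d0 : is_derive cw 1 F 0.
  apply: (@derive1_at_max _ F (cw - e) (cw + e)).
  - by rewrite lerD2l ge0_cp // ltW.
  - by move=> t /good [t0 ht]; case: (Fder t t0 ht).
  - rewrite in_itv /=; apply/andP; split; lra.
  - exact: Fmax.
have E1 : 'D_1 F cw = D cw by case: (Fder cw c0 hint).
have E2 : 'D_1 F cw = 0 by case: d0.
have dD : D cw = 0 by rewrite -E1 E2.
have SE : \sum_(i < n) (p i * beta i) * (derive1 U (Ret i * (w - cw) + Y i) * - Ret i)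
    = - \sum_(i < n) p i * (beta i * Ret i * derive1 U (Ret i * (w - cw) + Y i)).
  by rewrite -sumrN; apply: eq_bigr => i _; ring.
by move: dD; rewrite /D SE => /eqP; rewrite subr_eq0 => /eqP.
Unshelve. all: by end_near.
Qed.
Lemma corner (R : realType) (n : nat) (p beta Ret Y : 'I_n -> R) (c d : R -> R) :
  (forall x y, 0 < x -> x < y -> d y < d x) ->
  (forall x, 0 < x -> 0 < d x) ->
  (forall K, exists x, 0 < x /\ K < d x) ->
  (forall i, 0 < p i) -> (forall i, 0 < beta i) -> (forall i, 0 < Ret i) ->
  concave_on `]0, +oo[ c ->
  (forall w, 0 < w -> 0 < c w /\ forall i, 0 <= Ret i * (w - c w) + Y i) ->
  (forall w, 0 < w -> (forall i, 0 < Ret i * (w - c w) + Y i) ->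
     d (c w) = \sum_(i < n) p i * (beta i * Ret i * d (Ret i * (w - c w) + Y i))) ->
  forall j w0 w1, 0 < w0 -> 0 < w1 -> Ret j * (w0 - c w0) + Y j = 0 ->
  (forall i, 0 < Ret i * (w1 - c w1) + Y i) -> False.
Proof.
move=> hdec hdpos hlim p0 b0 R0 hconc hfeas heul j w0 w1 w00 w10 hw0 hw1.
have hnin : forall x y, 0 < x -> x <= y -> d y <= d x.
  move=> x y x0; rewrite le_eqVlt => /orP[/eqP->//|xy]; exact/ltW/hdec.
have cc : forall x y t, 0 < x -> 0 < y -> 0 <= t <= 1 ->
    t * c x + (1 - t) * c y <= c (t * x + (1 - t) * y).
  by move=> x y t x0 y0 ht; apply: hconc => //=; rewrite in_itv /= andbT.
pose sj := fun w => Ret j * (w - c w) + Y j.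
have sj0 : forall w, 0 < w -> 0 <= sj w by move=> w /hfeas [_ ]; apply.
have sjcv : forall x y t, 0 < x -> 0 < y -> 0 <= t <= 1 ->
    sj (t * x + (1 - t) * y) <= t * sj x + (1 - t) * sj y.
  move=> x y t x0 y0 ht; have := cc x y t x0 y0 ht; rewrite /sj.
  have Rj := R0 j; move: ht => /andP[t0 t1] => h. nra.
have sint : forall w, 0 < w -> 0 < sj w -> forall i, 0 < Ret i * (w - c w) + Y i.
  move=> w wp hs i; have [_ /(_ i) hi] := hfeas w0 w00.
  have Rj := R0 j; have Ri := R0 i; move: hs; rewrite /sj => hs.
  have : 0 < (w - c w) - (w0 - c w0) by nra.
  nra.
have ebound : forall w, 0 < w -> 0 < sj w -> p j * beta j * Ret j * d (sj w) <= d (c w).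
  move=> w wp hs; rewrite heul //; last exact: sint.
  rewrite (bigD1 j) //= -[X in X <= _]addr0 mulrA mulrA lerD2l.
  apply: sumr_ge0 => i _; have := sint w wp hs i => hi.
  by apply: mulr_ge0; [exact: ltW | apply: mulr_ge0; [apply: mulr_ge0; exact: ltW|exact/ltW/hdpos]].
have sw1 : 0 < sj w1.
  by move: (hw1 j).
have [b [lam1 [bp [l10 [l11 lw]]]]] : exists b lam1, 0 < b /\ 0 < lam1 /\ lam1 < 1 /\ w0 + lam1 * (b - w0) = w1.
  have : w0 != w1.
    by apply/eqP => hw; move: sw1; rewrite /sj -hw -/(sj w0) /sj hw0 ltxx.
  rewrite neq_lt => /orP[hw|hw].
  - exists (2 * w1 - w0), (1/2); split; first lra.
    split; [lra| split; [lra| lra]].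
  - exists (w1 / 2); exists ((w0 - w1) / (w0 - w1 / 2)).
    have hne : w0 - w1 / 2 != 0 by apply/lt0r_neq0; lra.
    split; first lra. split; first by apply: divr_gt0; lra.
    split; first by rewrite ltr_pdivrMr; lra.
    by field; apply/lt0r_neq0; lra.
pose W := fun l => w0 + l * (b - w0).
have Wp : forall l, 0 <= l <= 1 -> 0 < W l.
  move=> l /andP[l0 l1]; rewrite /W; nra.
have cv : forall a b' x, 0 <= a -> a < b' -> b' <= 1 -> a <= x -> x <= b' ->
    (b' - a) * sj (W x) <= (b' - x) * sj (W a) + (x - a) * sj (W b').
  move=> a b' x a0 ab b1 ax xb.
  pose t := (b' - x) / (b' - a).
  have hne : b' - a != 0 by apply/lt0r_neq0; lra.
  have t0 : 0 <= t by apply: divr_ge0; lra.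
  have t1 : t <= 1 by rewrite ler_pdivrMr; lra.
  have WE : W x = t * W a + (1 - t) * W b' by rewrite /W /t; field.
  have := sjcv (W a) (W b') t (Wp a ltac:(apply/andP; split; lra)) (Wp b' ltac:(apply/andP; split; lra)) ltac:(apply/andP; split; lra).
  rewrite -WE => h.
  have -> : (b' - x) * sj (W a) + (x - a) * sj (W b') = (b' - a) * (t * sj (W a) + (1 - t) * sj (W b')).
    by rewrite /t; field.
  by apply: ler_wpM2l => //; lra.
have W0 : W 0 = w0 by rewrite /W mul0r addr0.
have W1 : W 1 = b by rewrite /W mul1r addrC subrK.
have Wl1 : W lam1 = w1 by [].
pose A := [set l : R | 0 <= l <= 1 /\ sj (W l) = 0].
have A0 : A 0 by split; [rewrite lexx ler01 | rewrite W0].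
have Alt : forall l, A l -> l < lam1.
  move=> l [/andP[l0 l1] hl]; rewrite ltNge; apply/negP => hl1.
  have := cv 0 l lam1 (lexx 0) ltac:(lra) l1 ltac:(lra) hl1.
  have hs0 : sj w0 = 0 := hw0.
  rewrite hl W0 Wl1 hs0 !mulr0 addr0 => h.
  have : 0 < l * sj w1 by apply: mulr_gt0 => //; lra.
  lra.
have hsA : has_sup A.
  split; first by exists 0.
  by exists 1 => l [/andP[_ l1] _].
pose L := sup A.
have L0 : 0 <= L by apply: sup_upper_bound.
have L1 : L <= lam1.
  by apply: ge_sup; [exists 0 | move=> l /Alt /ltW].
pose m := Num.min (c w0) (c b).
have m1 : m <= c w0 by rewrite /m ge_min lexx.
have m2 : m <= c b by rewrite /m ge_min lexx orbT.
have mp : 0 < m by rewrite /m lt_min (hfeas w0 w00).1 (hfeas b bp).1.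
have cWge : forall l, 0 <= l <= 1 -> m <= c (W l).
  move=> l hl; have := cc b w0 l bp w00 hl.
  have -> : l * b + (1 - l) * w0 = W l by rewrite /W; ring.
  move: hl => /andP[l0 l1] h; nra.
pose q := p j * beta j * Ret j.
have qp : 0 < q by rewrite /q !mulr_gt0.
pose K := d m / q.
have qK : q * K = d m by rewrite /K mulrC mulfVK // gt_eqF.
have [x0 [x00 hx0]] := hlim K.
pose D := 4 * (sj b + 1 + x0).
have sjb := sj0 b bp.
have Dp : 0 < D by rewrite /D; lra.
pose eps := (1 - lam1) * x0 / D.
have eps0 : 0 < eps by rewrite /eps divr_gt0 // mulr_gt0 //; lra.
have epsD : eps * D = (1 - lam1) * x0 by rewrite /eps mulfVK // gt_eqF.
have epslt : eps < 1 - lam1.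
  have : (1 - lam1) * x0 < (1 - lam1) * D by rewrite ltr_pM2l /D; lra.
  rewrite -epsD => h; nra.
have [l0 Al0 hl0] := sup_adherent eps0 hsA.
have l0L : l0 <= L by apply: sup_upper_bound.
pose l := L + eps.
have lA : ~ A l.
  move=> /(sup_upper_bound hsA); rewrite -/L /l; lra.
have l01 : 0 <= l <= 1 by apply/andP; split; rewrite /l; lra.
have sjl : 0 < sj (W l).
  rewrite lt_neqAle sj0 ?Wp // andbT; apply/eqP => h; apply: lA; split => //.
move: (Al0) => [/andP[l00 l01'] hsl0].
have := cv l0 1 l l00 ltac:(rewrite -/L in hl0; lra) (lexx 1) ltac:(rewrite /l; lra) ltac:(move: l01 => /andP[]; lra).
rewrite hsl0 W1 mulr0 add0r => hcv.
have sjx : sj (W l) < x0.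
  have h1 : (1 - lam1) * sj (W l) <= (1 - l0) * sj (W l) by apply: ler_wpM2r; lra.
  have h2 : (l - l0) * sj b <= 2 * eps * sj b by apply: ler_wpM2r => //; rewrite /l -/L in hl0 *; lra.
  have h3 : 2 * eps * sj b < eps * D.
    have hD : 0 < D - 2 * sj b by rewrite /D; lra.
    have := mulr_gt0 eps0 hD; lra.
  have h4 : (1 - lam1) * sj (W l) < (1 - lam1) * x0 by lra.
  by move: h4; rewrite ltr_pM2l //; lra.
have hd1 : K < d (sj (W l)) by apply: lt_trans hx0 _; apply: hdec.
have hd2 := ebound (W l) (Wp l l01) sjl.
have hd3 : d (c (W l)) <= d m by apply: hnin => //; apply: cWge.
have : q * K < q * d (sj (W l)) by rewrite ltr_pM2l.
rewrite qK -/q in hd2 *; lra.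
Qed.

Lemma ivt2 (R : realType) (d : R -> R) (a b v : R) :
  (forall x, 0 < x -> derivable d x 1) -> 0 < a -> 0 < b ->
  (d a <= v <= d b) \/ (d b <= v <= d a) -> exists x, 0 < x /\ d x = v.
Proof.
move=> hd a0 b0 hv.
case: (leP a b) => hab.
  apply: (ivt_pos hd a0 hab); rewrite ge_min le_max.
  by case: hv => /andP[h1 h2]; rewrite ?h1 ?h2 ?orbT.
apply: (ivt_pos hd b0 (ltW hab)); rewrite ge_min le_max.
by case: hv => /andP[h1 h2]; rewrite ?h1 ?h2 ?orbT.
Qed.

Theorem lemma2 (R : realType) (n : nat) (p beta Ret Y : 'I_n -> R)
  (u : R -> \bar R) (c : R -> R) :
  (* u : [0,oo) -> R u {-oo}, finite on (0,oo) *)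
  u 0 != +oo%E ->
  (forall x, 0 < x -> u x \is a fin_num) ->
  (* C^2 on (0,oo) *)
  (forall x, 0 < x -> derivable (ureal u) x 1 /\
                      derivable (derive1 (ureal u)) x 1) ->
  (forall x, 0 < x -> {for x, continuous (derive1 (derive1 (ureal u)))}) ->
  (forall x, 0 < x -> 0 < derive1 (ureal u) x) ->
  (forall x, 0 < x -> derive1 (derive1 (ureal u)) x < 0) ->
  (derive1 (ureal u) x @[x --> 0^'+] --> +oo) ->
  (* (beta, R, Y): finite support, strictly positive components *)
  (forall i, 0 < p i) -> \sum_(i < n) p i = 1 ->
  (forall i, 0 < beta i) -> (forall i, 0 < Ret i) -> (forall i, 0 < Y i) ->
  (* c is the consumption function *)
  is_consumption_function u p beta Ret Y c ->
  concave_on `]0, +oo[ c ->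
  concave_on [set w - c w | w in `]0, +oo[] (gfun u p beta Ret Y).
Proof.
move=> hu0 hfin hder hcont hdpos hdneg hlim p0 psum b0 R0 Y0 hc hconc.
have hderU : forall x, 0 < x -> derivable (ureal u) x 1 by move=> x /hder [].
have hderd : forall x, 0 < x -> derivable (derive1 (ureal u)) x 1 by move=> x /hder [].
have hdec := decr_pos hderd hdneg.
set d := derive1 (ureal u) in hdec hderd hdpos hlim *.
have hnin : forall x y, 0 < x -> x <= y -> d y <= d x.
  move=> x y x0; rewrite le_eqVlt => /orP[/eqP->//|xy]; exact/ltW/hdec.
have dinj : forall x y, 0 < x -> 0 < y -> d x = d y -> x = y.
  move=> x y x0 y0 e; apply/eqP; rewrite eq_le; apply/andP; split; rewrite leNgt; apply/negP => h.
  - by have := hdec y x y0 h; rewrite e ltxx.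
  - by have := hdec x y x0 h; rewrite e ltxx.
have hlim' : forall K, exists x, 0 < x /\ K < d x.
  move=> K; move/cvgryPgt: hlim => /(_ K) hK.
  have : \forall x \near 0^'+, 0 < x /\ K < d x.
    by near=> x; split; near: x; [exact: nbhs_right_gt | exact: hK].
  by move/filter_ex.
have hfeas : forall w, 0 < w -> 0 < c w /\ forall i, 0 <= Ret i * (w - c w) + Y i.
  by move=> w /hc [[]].
have heul : forall w, 0 < w -> (forall i, 0 < Ret i * (w - c w) + Y i) ->
     d (c w) = \sum_(i < n) p i * (beta i * Ret i * d (Ret i * (w - c w) + Y i)).
  by move=> w w0 hi; apply: euler.
have hcorner := corner hdec hdpos hlim' p0 b0 R0 hconc hfeas heul.
pose V := fun s => \sum_(i < n) p i * (beta i * Ret i * d (Ret i * s + Y i)).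
have Vmono : forall s s', s <= s' -> (forall i, 0 < Ret i * s + Y i) -> V s' <= V s.
  move=> s s' ss hs; apply: ler_sum => i _.
  apply: ler_wpM2l; first exact/ltW.
  apply: ler_wpM2l; first by apply/ltW/mulr_gt0.
  apply: hnin => //; have := R0 i; nra.
have gE : forall w, 0 < w -> (forall i, 0 < Ret i * (w - c w) + Y i) ->
    gfun u p beta Ret Y (w - c w) = c w.
  move=> w w0 hi; rewrite /gfun -/d -(heul w w0 hi).
  have [gp gd] := pos_inv_spec (ex_intro (fun x => 0 < x /\ d x = d (c w)) (c w) (conj (hfeas w w0).1 erefl)).
  exact: dinj gp (hfeas w w0).1 gd.
have corn : forall w, 0 < w -> ~ (forall i, 0 < Ret i * (w - c w) + Y i) ->
    exists j, Ret j * (w - c w) + Y j = 0.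
  move=> w w0 hni; apply: contra_notP hni => hne i.
  have := (hfeas w w0).2 i; rewrite le_eqVlt => /orP[/eqP h|//].
  by exfalso; apply: hne; exists i.
move=> x y t [w1 w1p <-] [w2 w2p <-] ht.
move: w1p w2p; rewrite /= !in_itv /= !andbT => w1p w2p.
have [i1|n1] := pselect (forall i, 0 < Ret i * (w1 - c w1) + Y i);
have [i2|n2] := pselect (forall i, 0 < Ret i * (w2 - c w2) + Y i).
- move: ht => /andP[t0 t1].
  pose wt := t * w1 + (1 - t) * w2.
  have wtp : 0 < wt by rewrite /wt; nra.
  have it : forall i, 0 < Ret i * (wt - c wt) + Y i.
    have [//|nt] := pselect (forall i, 0 < Ret i * (wt - c wt) + Y i).
    by have [k hk] := corn wt wtp nt; case: (hcorner k wt w1 wtp w1p hk i1).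
  rewrite (gE w1 w1p i1) (gE w2 w2p i2).
  have cc : t * c w1 + (1 - t) * c w2 <= c wt.
    by apply: hconc; rewrite /= ?in_itv /= ?andbT // t0 t1.
  set z := t * (w1 - c w1) + (1 - t) * (w2 - c w2).
  have stz : wt - c wt <= z by rewrite /z /wt; lra.
  have zi : forall i, 0 < Ret i * z + Y i.
    move=> i; have a1 := i1 i; have a2 := i2 i.
    have -> : Ret i * z + Y i = t * (Ret i * (w1 - c w1) + Y i) + (1 - t) * (Ret i * (w2 - c w2) + Y i).
      by rewrite /z; ring.
    set a := Ret i * (w1 - c w1) + Y i in a1 *; set b := Ret i * (w2 - c w2) + Y i in a2 *.
    case: (leP a b) => hab; nra.
  have e1 := heul w1 w1p i1; have e2 := heul w2 w2p i2; have et := heul wt wtp it.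
  have hb : (d (c w1) <= V z <= d (c w2)) \/ (d (c w2) <= V z <= d (c w1)).
    rewrite e1 e2 -/(V _) -/(V _).
    have [hs|hs] := leP (w1 - c w1) (w2 - c w2).
    + right; apply/andP; split.
        by apply: Vmono => //; rewrite /z; nra.
      by apply: Vmono i1; rewrite /z; nra.
    + left; apply/andP; split.
        by apply: Vmono => //; rewrite /z; nra.
      by apply: Vmono i2; rewrite /z; nra.
  have hxs := ivt2 hderd (hfeas w1 w1p).1 (hfeas w2 w2p).1 hb.
  have [gp gd] := pos_inv_spec hxs.
  have -> : gfun u p beta Ret Y z = pos_inverse d (V z) by [].
  apply: (le_trans cc).
  rewrite leNgt; apply/negP => hlt.
  have := hdec _ _ gp hlt.
  rewrite gd et -/(V _) => hv.
  have := Vmono _ _ stz it; lra.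
- by have [k hk] := corn w2 w2p n2; case: (hcorner k w2 w1 w2p w1p hk i1).
- by have [k hk] := corn w1 w1p n1; case: (hcorner k w1 w2 w1p w2p hk i2).
- have [k1 hk1] := corn w1 w1p n1; have [k2 hk2] := corn w2 w2p n2.
  have e12 : w2 - c w2 = w1 - c w1.
    have h1 := (hfeas w2 w2p).2 k1; have h2 := (hfeas w1 w1p).2 k2.
    have r1 := R0 k1; have r2 := R0 k2; nra.
  rewrite e12.
  have -> : t * (w1 - c w1) + (1 - t) * (w1 - c w1) = w1 - c w1 by ring.
  by rewrite -mulrDl addrC subrK mul1r.
Unshelve. all: by end_near.
Qed.
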